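(* Let $\widehat{\mathbf{H}}_u,\mathbf{L}_1\in\mathbb{R}^{N_s\times N_b}$, $\lambda>0$, $\gamma_u\ge0$, $\beta_u\in\mathbb{R}$, $\mu_0>0$, $\rho>1$, $\mu_{\max}\ge\mu_0$. Let $f(\mathbf{L})=\|\mathbf{L}\|_*+\gamma_u\|\mathbf{L}-\beta_u\mathbf{L}_1\|_F^2$ and $g(\mathbf{S})=\lambda\|\mathbf{S}\|_1$, and consider the sequence $\{(\mathbf{L}_u^k,\mathbf{S}_u^k,\mathbf{Y}^k)\}_{k\ge0}$ generated from $\mathbf{S}_u^0=\mathbf{0}$, $\mathbf{Y}^0=\mathbf{0}$ by $$\mathbf{L}_u^{k+1}=\arg\min_{\mathbf{L}} f(\mathbf{L})+\tfrac{\mu_k}{2}\bigl\|\mathbf{L}-(\widehat{\mathbf{H}}_u-\mathbf{S}_u^k+\tfrac{1}{\mu_k}\mathbf{Y}^k)\bigr\|_F^2,$$ $$\mathbf{S}_u^{k+1}=\arg\min_{\mathbf{S}} g(\mathbf{S})+\tfrac{\mu_k}{2}\bigl\|\mathbf{S}-(\widehat{\mathbf{H}}_u-\mathbf{L}_u^{k+1}+\tfrac{1}{\mu_k}\mathbf{Y}^k)\bigr\|_F^2,$$ $$\mathbf{Y}^{k+1}=\mathbf{Y}^k+\mu_k(\widehat{\mathbf{H}}_u-\mathbf{L}_u^{k+1}-\mathbf{S}_u^{k+1}),\qquad \mu_{k+1}=\min\{\rho\mu_k,\mu_{\max}\}.$$ Then the sequence $\{(\mathbf{L}_u^k,\mathbf{S}_u^k)\}$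 is bounded.
   Context: $\|\cdot\|_*$ is the nuclear norm, $\|\cdot\|_1$ the entrywise $\ell_1$-norm, $\|\cdot\|_F$ the Frobenius norm. These iterations are the ADMM scheme for $\min_{\mathbf{L},\mathbf{S}} f(\mathbf{L})+g(\mathbf{S})$ subject to $\mathbf{L}+\mathbf{S}=\widehat{\mathbf{H}}_u$, with augmented Lagrangian $\mathcal{L}_\mu(\mathbf{L},\mathbf{S},\mathbf{Y})=f(\mathbf{L})+g(\mathbf{S})+\langle\mathbf{Y},\widehat{\mathbf{H}}_u-\mathbf{L}-\mathbf{S}\rangle+\frac{\mu}{2}\|\widehat{\mathbf{H}}_u-\mathbf{L}-\mathbf{S}\|_F^2$, $\langle\mathbf{A},\mathbf{B}\rangle=\mathrm{tr}(\mathbf{A}^\top\mathbf{B})$. *)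

(* Defs.v *)
From HB Require Import structures.
From mathcomp Require Import all_boot all_order all_algebra.
From mathcomp Require Import boolp classical_sets reals.
Set Implicit Arguments. Unset Strict Implicit. Unset Printing Implicit Defensive.
Import Order.TTheory GRing.Theory Num.Theory.
Local Open Scope ring_scope.

Section MatNorms.
Variables (R : realType) (m n : nat).

Definition is_svd (A : 'M[R]_(m, n)) (U : 'M[R]_m) (D : 'M[R]_(m, n))
    (V : 'M[R]_n) : Prop :=
  [/\ U^T *m U = 1%:M, V^T *m V = 1%:M,
      (forall (i : 'I_m) (j : 'I_n), (i : nat) != j -> D i j = 0),
      (forall (i : 'I_m) (j : 'I_n), 0 <= D i j) &
      A = U *m D *m V^T].

Definition svd_diag (A : 'M[R]_(m, n)) : 'M[R]_(m, n) :=
  xget 0 [set D | exists U V, is_svd A U D V].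

(* Nuclear norm: sum of the singular values. *)
Definition nucnorm (A : 'M[R]_(m, n)) : R :=
  \sum_(i < m) \sum_(j < n) svd_diag A i j.

Definition l1norm (A : 'M[R]_(m, n)) : R := \sum_(i < m) \sum_(j < n) `|A i j|.

Definition frob (A : 'M[R]_(m, n)) : R :=
  Num.sqrt (\sum_(i < m) \sum_(j < n) A i j ^+ 2).

End MatNorms.

(* Main.v *)
Require Import Defs.
From HB Require Import structures.
From mathcomp Require Import all_boot all_order all_algebra.
From mathcomp Require Import boolp classical_sets reals.
From mathcomp Require Import complex spectral ring lra.
Import Order.TTheory GRing.Theory Num.Theory.
Local Open Scope ring_scope.
Set Implicit Arguments. Unset Strict Implicit. Unset Printing Implicit Defensive.

Section S.
Variable R : realType.

Lemma mx11_tr (M : 'M[R]_1) : M^T = M.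
Proof. by apply/matrixP=> i j; rewrite mxE !ord1. Qed.

Lemma rv_pos n (x : 'rV[R]_n) : x != 0 -> 0 < (x *m x^T) 0 0.
Proof.
move=> nx0; have [j xj] : exists j, x 0 j != 0.
  apply/existsP; apply: contraR nx0; rewrite negb_exists => /forallP H.
  by apply/eqP/rowP => j; rewrite mxE; apply/eqP; move: (H j); rewrite negbK.
rewrite mxE (bigD1 j) //= mxE ltr_pwDl //.
  by rewrite -expr2 exprn_even_gt0.
by apply: sumr_ge0 => i _; rewrite mxE -expr2 sqr_ge0.
Qed.
Lemma rv_ge0 n (x : 'rV[R]_n) : 0 <= (x *m x^T) 0 0.
Proof. by rewrite mxE; apply: sumr_ge0 => i _; rewrite mxE -expr2 sqr_ge0. Qed.
Lemma trB m n (A B : 'M[R]_(m, n)) : (A - B)^T = A^T - B^T.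
Proof. by apply/matrixP => i j; rewrite !mxE. Qed.
Lemma trD m n (A B : 'M[R]_(m, n)) : (A + B)^T = A^T + B^T.
Proof. by apply/matrixP => i j; rewrite !mxE. Qed.
Lemma trZ m n (c : R) (A : 'M[R]_(m, n)) : (c *: A)^T = c *: A^T.
Proof. by apply/matrixP => i j; rewrite !mxE. Qed.
End S.

Section S.
Variable R : realType.

Lemma cReD (x y : R[i]) : complex.Re (x + y) = complex.Re x + complex.Re y. Proof. by case: x => ? ?; case: y => ? ?; by []. Qed.
Lemma cImD (x y : R[i]) : complex.Im (x + y) = complex.Im x + complex.Im y. Proof. by case: x => ? ?; case: y => ? ?; by []. Qed.
Lemma cReM (x y : R[i]) : complex.Re (x * y) = complex.Re x * complex.Re y - complex.Im x * complex.Im y. Proof. by case: x => ? ?; case: y => ? ?; simpl; ring. Qed.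
Lemma cImM (x y : R[i]) : complex.Im (x * y) = complex.Re x * complex.Im y + complex.Im x * complex.Re y. Proof. by case: x => ? ?; case: y => ? ?; simpl; ring. Qed.

Lemma sym_eig_row n (B : 'M[R]_n.+1) : B^T = B ->
  exists (x : 'rV[R]_n.+1) (e : R), x != 0 /\ x *m B = e *: x.
Proof.
move=> sB.
pose B' := map_mx (real_complex R) B.
have [a /eigenvalueP [v vB vn0]] := eigenvalue_closed B' (ltn0Sn n).
pose p := map_mx (@complex.Re R) v; pose q := map_mx (@complex.Im R) v.
have ReS : forall (I : finType) (F : I -> R[i]), complex.Re (\sum_i F i) = \sum_i complex.Re (F i).
  by move=> I F; apply: (big_morph _ cReD).
have ImS : forall (I : finType) (F : I -> R[i]), complex.Im (\sum_i F i) = \sum_i complex.Im (F i).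
  by move=> I F; apply: (big_morph _ cImD).
have hp : p *m B = complex.Re a *: p - complex.Im a *: q.
  apply/rowP => j; have H := congr1 (fun M : 'rV[R[i]]_n.+1 => complex.Re (M 0 j)) vB.
  rewrite /B' /= !mxE ReS in H; rewrite !mxE -cReM -H.
  by apply: eq_bigr => i _; rewrite !mxE cReM /= mulr0 subr0.
have hq : q *m B = complex.Im a *: p + complex.Re a *: q.
  apply/rowP => j; have H := congr1 (fun M : 'rV[R[i]]_n.+1 => complex.Im (M 0 j)) vB.
  rewrite /B' /= !mxE ImS in H; rewrite !mxE addrC -cImM -H.
  by apply: eq_bigr => i _; rewrite !mxE cImM /= mulr0 add0r.
have sym : p *m B *m q^T = q *m B *m p^T.
  by rewrite -[LHS]mx11_tr !trmx_mul trmxK sB mulmxA.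
have pq : q *m p^T = p *m q^T by rewrite -[LHS]mx11_tr trmx_mul trmxK.
have vnz : p != 0 \/ q != 0.
  case: (eqVneq p 0) => [p0|]; last by left.
  case: (eqVneq q 0) => [q0|]; last by right.
  exfalso; move/negP: vn0; apply; apply/eqP/rowP => j.
  move: (congr1 (fun M : 'rV[R]_n.+1 => M 0 j) p0) (congr1 (fun M : 'rV[R]_n.+1 => M 0 j) q0); rewrite !mxE.
  by case: (v 0 j) => /= ? ? -> ->.
have Ima : complex.Im a = 0.
  move: sym; rewrite hp hq !mulmxBl !mulmxDl -!scalemxAl pq => /eqP.
  rewrite -subr_eq0 => /eqP /(congr1 (fun M : 'M[R]_1 => M 0 0)); rewrite !mxE.
  move=> H; have : complex.Im a * ((p *m p^T) 0 0 + (q *m q^T) 0 0) = 0.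
    rewrite !mxE; apply/eqP; rewrite -oppr_eq0; apply/eqP; rewrite -[RHS]H; ring.
  move/eqP; rewrite mulf_eq0 => /orP [/eqP //|]; rewrite paddr_eq0; first last.
  - case: (eqVneq q 0) => [->|/rv_pos /ltW //]. by rewrite mul0mx mxE.
  - exact: rv_ge0.
  - by case: vnz => /rv_pos/gt_eqF -> //; rewrite andbF.
rewrite Ima in hp hq; rewrite scale0r subr0 in hp; rewrite scale0r add0r in hq.
by case: vnz => ?; [exists p | exists q]; exists (complex.Re a).
Qed.
Lemma sym_eig n (B : 'M[R]_n.+1) : B^T = B ->
  exists (v : 'cV[R]_n.+1) (e : R), v^T *m v = 1%:M /\ B *m v = e *: v.
Proof.
move=> sB; have [x [e [xn0 xB]]] := sym_eig_row sB.
have sp := rv_pos xn0; set s := (x *m x^T) 0 0 in sp.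
exists ((Num.sqrt s)^-1 *: x^T), e; split.
  rewrite trZ trmxK -scalemxAl -scalemxAr scalerA [x *m x^T]mx11_scalar -/s.
  rewrite -invfM -expr2 sqr_sqrtr ?(ltW sp) // scale_scalar_mx mulVf //.
  by rewrite gt_eqF.
rewrite -scalemxAr; have -> : B *m x^T = e *: x^T.
  by rewrite -[B]sB -trmx_mul xB trZ.
by rewrite !scalerA mulrC.
Qed.
End S.

Section S.
Variable R : realType.

Lemma householder n (e v : 'cV[R]_n) : e^T *m e = 1%:M -> v^T *m v = 1%:M ->
  exists H : 'M[R]_n, H^T *m H = 1%:M /\ H *m e = v.
Proof.
move=> he hv; case: (eqVneq e v) => [<-|nev]; first by exists 1%:M; rewrite trmx1 !mul1mx.
pose w := e - v.
have wE : w = e - v by [].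
clearbody w.
have wn0 : w^T != 0 by rewrite wE trmx_eq0 subr_eq0.
pose s := (w^T *m w) 0 0.
have spos : 0 < s by move: (rv_pos wn0); rewrite trmxK.
pose t := (v^T *m e) 0 0.
have vte : v^T *m e = t%:M by rewrite {1}[v^T *m e]mx11_scalar.
have etv : e^T *m v = t%:M by rewrite -[e^T *m v]mx11_tr trmx_mul trmxK vte.
have wte : w^T *m e = (1 - t)%:M by rewrite wE trB mulmxBl he vte raddfB.
have wtw : w^T *m w = s%:M by rewrite {1}[w^T *m w]mx11_scalar.
have sE : s = 2 - 2 * t.
  have := congr1 (fun M : 'M[R]_1 => M 0 0) wtw.
  rewrite wE trB mulmxBl !mulmxBr he hv vte etv !mxE /= !mulr1n => <-; ring.
pose c := 2 / s.
exists (1%:M - c *: (w *m w^T)); split.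
  have Ht : (1%:M - c *: (w *m w^T))^T = 1%:M - c *: (w *m w^T).
    by rewrite trB trmx1 trZ trmx_mul trmxK.
  have WW : (w *m w^T) *m (w *m w^T) = s *: (w *m w^T).
    by rewrite mulmxA -[w *m w^T *m w]mulmxA wtw mul_mx_scalar -scalemxAl.
  have cs : c * s = 2 by rewrite /c -mulrA mulVf ?gt_eqF // mulr1.
  rewrite Ht; move: (w *m w^T) WW => W WW.
  rewrite mulmxBr mulmx1 mulmxBl mul1mx -scalemxAl -scalemxAr WW !scalerA.
  rewrite -mulrA cs; have -> : c * 2 = c + c by ring.
  rewrite scalerDl; set X := c *: W.
  by rewrite opprB addrK subrK.
rewrite mulmxBl mul1mx -scalemxAl -mulmxA wte mul_mx_scalar scalerA.
have -> : c * (1 - t) = 1.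
  by rewrite /c sE; field; apply/eqP => H; move: spos; rewrite sE H ltxx.
by rewrite scale1r wE opprB addrC subrK.
Qed.
End S.

Section S.
Variable R : realType.

Definition e0 n : 'cV[R]_(1 + n) := col_mx 1%:M 0.

Lemma e0_unit n : (e0 n)^T *m e0 n = 1%:M.
Proof. by rewrite /e0 tr_col_mx trmx1 trmx0 mul_row_col mulmx1 mul0mx addr0. Qed.

Lemma block_first m n (B : 'M[R]_(1 + m, 1 + n)) (s : R) :
  B *m e0 n = col_mx s%:M 0 -> (e0 m)^T *m B = row_mx s%:M 0 ->
  B = block_mx s%:M 0 0 (drsubmx B).
Proof.
rewrite /e0 tr_col_mx trmx1 trmx0 -[B]submxK mul_block_col mul_row_block.
rewrite !mulmx1 !mulmx0 !mul1mx !mul0mx !addr0 block_mxKdr.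
by move=> /eq_col_mx [-> ->] /eq_row_mx [_ ->].
Qed.

Lemma orth_sym n (H : 'M[R]_n) : H^T *m H = 1%:M -> H *m H^T = 1%:M.
Proof. exact: mulmx1C. Qed.

Lemma pos_eig n (B : 'M[R]_n) : B^T = B -> B != 0 ->
  exists (v : 'cV[R]_n) (e : R), [/\ v^T *m v = 1%:M, B *m v = e *: v & e != 0].
Proof.
elim: n B => [|n IH] B sB Bn0; first by move: Bn0; rewrite (flatmx0 B) eqxx.
have [v [e [vu vB]]] := sym_eig sB.
case: (eqVneq e 0) => [e0'|]; last by exists v, e.
have [H [Ho He]] := householder (e0_unit n) vu.
have Ho' := orth_sym Ho.
pose C : 'M[R]_(1 + n) := H^T *m B *m H.
have sC : C^T = C by rewrite /C !trmx_mul trmxK sB mulmxA.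
have Ce : C *m e0 n = col_mx 0%:M 0.
  by rewrite /C -!mulmxA He vB e0' scale0r mulmx0 raddf0 col_mx0.
have eC : (e0 n)^T *m C = row_mx 0%:M 0.
  by rewrite -sC -trmx_mul Ce tr_col_mx !trmx0 tr_scalar_mx.
have CE := block_first Ce eC.
have BE : B = H *m C *m H^T by rewrite /C !mulmxA Ho' mul1mx -mulmxA Ho' mulmx1.
set d := drsubmx C in CE.
have sd : d^T = d.
  by have := sC; rewrite CE tr_block_mx => /eq_block_mx [_ _ _ ->].
have dn0 : d != 0.
  apply: contraNneq Bn0 => d0; rewrite BE CE d0 raddf0 block_mx0.
  by rewrite mulmx0 mul0mx.
have [v' [e' [v'u dv' e'n0]]] := IH d sd dn0.
exists (H *m col_mx 0 v'), e'; split => //.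
  rewrite trmx_mul mulmxA -[_ *m H^T *m H]mulmxA Ho mulmx1 tr_col_mx trmx0.
  by rewrite mul_row_col mul0mx add0r.
have BH : B *m H = H *m C by rewrite /C !mulmxA Ho' mul1mx.
rewrite mulmxA BH -mulmxA CE mul_block_col raddf0 !mul0mx !add0r dv'.
by rewrite scalemxAr scale_col_mx scaler0.
Qed.
End S.
Arguments e0 {R} n. Arguments e0_unit {R} n.

Section S.
Variable R : realType.

Lemma orth_mul n (G K : 'M[R]_n) : G^T *m G = 1%:M -> K^T *m K = 1%:M ->
  (G *m K)^T *m (G *m K) = 1%:M.
Proof.
move=> hG hK; rewrite trmx_mul mulmxA -[K^T *m G^T *m G]mulmxA hG mulmx1 //.
Qed.

Lemma orth_blk n (Q : 'M[R]_n) : Q^T *m Q = 1%:M ->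
  (block_mx (1%:M : 'M_1) 0 0 Q)^T *m block_mx (1%:M : 'M_1) 0 0 Q = 1%:M.
Proof.
move=> hQ; rewrite tr_block_mx trmx1 !trmx0 mulmx_block hQ.
by rewrite !mulmx0 !mul0mx !addr0 !add0r mulmx1 -scalar_mx_block.
Qed.

Lemma AtA0 m n (A : 'M[R]_(m, n)) : A^T *m A = 0 -> A = 0.
Proof.
move=> h; apply/matrixP => i j; rewrite mxE.
have := congr1 (fun M : 'M[R]_n => M j j) h; rewrite !mxE.
move=> /eqP; rewrite psumr_eq0; last by move=> k _; rewrite mxE -expr2 sqr_ge0.
move=> /allP /(_ i (mem_index_enum i)); rewrite mxE -expr2 sqrf_eq0 => /eqP //.
Qed.

Lemma blk_diag m n (a : R) (D' : 'M[R]_(m, n)) :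
  (forall (i : 'I_m) (j : 'I_n), (i : nat) != j -> D' i j = 0) ->
  forall (i : 'I_(1 + m)) (j : 'I_(1 + n)), (i : nat) != j ->
  block_mx (a%:M : 'M_1) 0 0 D' i j = 0.
Proof.
move=> hD i j; rewrite !mxE; case: (splitP i) => i' Hi; rewrite ?mxE; case: (splitP j) => j' Hj;
  rewrite ?mxE //.
- by rewrite Hi Hj !ord1 eqxx.
- by rewrite Hi Hj /= eqSS => /hD.
Qed.

Lemma blk_ge0 m n (a : R) (D' : 'M[R]_(m, n)) : 0 <= a ->
  (forall (i : 'I_m) (j : 'I_n), 0 <= D' i j) ->
  forall (i : 'I_(1 + m)) (j : 'I_(1 + n)), 0 <= block_mx (a%:M : 'M_1) 0 0 D' i j.
Proof.
move=> ha hD i j; rewrite !mxE; case: (splitP i) => i' Hi; rewrite ?mxE; case: (splitP j) => j' Hj;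
  rewrite ?mxE //.
exact: mulrn_wge0.
Qed.

Lemma trblk n (V' : 'M[R]_n) :
  (block_mx (1%:M : 'M_1) 0 0 V')^T = block_mx (1%:M : 'M_1) 0 0 V'^T.
Proof. by rewrite tr_block_mx trmx1 !trmx0. Qed.

Lemma svd_ex n m (A : 'M[R]_(m, n)) : exists U D V, is_svd A U D V.
Proof.
elim: n m A => [|n IH] m A.
  exists 1%:M, 0, 1%:M; split; rewrite ?trmx1 ?mul1mx //; try by move=> *; rewrite mxE.
  by rewrite (thinmx0 A) thinmx0.
case: m A => [|m] A.
  exists 1%:M, 0, 1%:M; split; rewrite ?trmx1 ?mul1mx //; try by move=> *; rewrite mxE.
  by rewrite (flatmx0 A) flatmx0.
case: (eqVneq A 0) => [->|An0].
  exists 1%:M, 0, 1%:M; split; rewrite ?trmx1 ?mul1mx ?mul0mx //; by move=> *; rewrite mxE.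
have sB : (A^T *m A)^T = A^T *m A by rewrite trmx_mul trmxK.
have Bn0 : A^T *m A != 0 by apply/eqP => /AtA0 A0; move/eqP: An0; apply.
have [v [e [vu vB en0]]] := pos_eig sB Bn0.
pose w := A *m v.
have wtw : w^T *m w = e%:M by rewrite /w trmx_mul -mulmxA (mulmxA A^T) vB -scalemxAr vu scalemx1.
have epos : 0 < e.
  rewrite lt_neqAle eq_sym en0 /=.
  have := rv_ge0 w^T; rewrite trmxK wtw mxE eqxx mulr1n //.
pose s := Num.sqrt e.
have spos : 0 < s by rewrite sqrtr_gt0.
pose u := s^-1 *: w.
have uu : u^T *m u = 1%:M.
  rewrite /u trZ -scalemxAl -scalemxAr scalerA wtw scale_scalar_mx -invfM -expr2.
  by rewrite sqr_sqrtr ?(ltW epos) // mulVf // gt_eqF.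
have [G [Go Ge]] := householder (e0_unit m) uu.
have [H [Ho He]] := householder (e0_unit n) vu.
have Go' := orth_sym Go; have Ho' := orth_sym Ho.
pose Bm : 'M[R]_(1 + m, 1 + n) := G^T *m A *m H.
have Be : Bm *m e0 n = col_mx s%:M 0.
  rewrite /Bm -!mulmxA He -/w.
  have -> : w = s *: u by rewrite /u scalerA mulfV ?gt_eqF // scale1r.
  by rewrite -scalemxAr -Ge mulmxA Go mul1mx /e0 scale_col_mx scalemx1 scaler0.
have eB : (e0 m)^T *m Bm = row_mx s%:M 0.
  rewrite /Bm !mulmxA -trmx_mul Ge.
  have -> : u^T *m A = s *: v^T.
    rewrite -[u^T *m A]trmxK trmx_mul trmxK /u -scalemxAr /w mulmxA vB scalerA.
    rewrite trZ; congr (_ *: _); rewrite /s -[e in _ * e](sqr_sqrtr (ltW epos)).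
    by rewrite expr2 mulrA mulVf ?mul1r // gt_eqF.
  rewrite -scalemxAl -He trmx_mul -mulmxA Ho mulmx1 /e0 tr_col_mx trmx1 trmx0.
  by rewrite scale_row_mx scalemx1 scaler0.
have BE := block_first Be eB.
have [U' [D' [V' [U'o V'o D'd D'p A'E]]]] := IH m (drsubmx Bm).
exists (G *m block_mx (1%:M : 'M_1) 0 0 U'), (block_mx (s%:M : 'M_1) 0 0 D'),
  (H *m block_mx (1%:M : 'M_1) 0 0 V'); split.
- by apply: orth_mul => //; apply: orth_blk.
- by apply: orth_mul => //; apply: orth_blk.
- exact: blk_diag.
- exact: blk_ge0 (ltW spos) D'p.
have E1 : block_mx (1%:M : 'M_1) 0 0 U' *m block_mx (s%:M : 'M_1) 0 0 D'
    *m block_mx (1%:M : 'M_1) 0 0 V'^T = Bm.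
  rewrite [in RHS]BE A'E !mulmx_block !mulmx0 !mul0mx !addr0 !add0r !mulmx1 !mul1mx. by rewrite mul0mx.
transitivity (G *m Bm *m H^T).
  by rewrite /Bm !mulmxA Go' mul1mx -mulmxA Ho' mulmx1.
by rewrite -E1 trmx_mul !mulmxA trblk.
Qed.
End S.

Section S.
Variable R : realType.
Variables m n : nat.

Definition ip (X Y : 'M[R]_(m, n)) := \sum_i \sum_j X i j * Y i j.

Definition Kop (Q : 'M[R]_(m, n)) := forall (x : 'cV[R]_m) (y : 'cV[R]_n),
  2 * (x^T *m Q *m y) 0 0 <= (x^T *m x) 0 0 + (y^T *m y) 0 0.

Lemma ent p q (M : 'M[R]_(p, q)) i j :
  ((delta_mx i 0 : 'cV[R]_p)^T *m M *m (delta_mx j 0 : 'cV[R]_q)) 0 0 = M i j.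
Proof. by rewrite trmx_delta -rowE -colE !mxE. Qed.

Lemma unit_col p (U : 'M[R]_p) i : U^T *m U = 1%:M ->
  ((U *m (delta_mx i 0 : 'cV[R]_p))^T *m (U *m (delta_mx i 0 : 'cV[R]_p))) 0 0 = 1.
Proof.
move=> hU; rewrite trmx_mul mulmxA -[_ *m U^T *m U]mulmxA hU mulmx1.
by rewrite -[(delta_mx i 0 : 'cV[R]_p)^T]mulmx1 ent mxE eqxx.
Qed.

Lemma K_W (Q : 'M[R]_(m, n)) (U : 'M[R]_m) (V : 'M[R]_n) :
  Kop Q -> U^T *m U = 1%:M -> V^T *m V = 1%:M ->
  forall i j, (U^T *m Q *m V) i j <= 1.
Proof.
move=> hK hU hV i j.
have h := hK (U *m (delta_mx i 0 : 'cV[R]_m)) (V *m (delta_mx j 0 : 'cV[R]_n)).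
rewrite !unit_col // in h.
have E : ((U *m (delta_mx i 0 : 'cV[R]_m))^T *m Q *m (V *m (delta_mx j 0 : 'cV[R]_n))) 0 0
   = (U^T *m Q *m V) i j by rewrite -[in RHS]ent trmx_mul !mulmxA.
rewrite E in h; lra.
Qed.

Lemma trN p q (A : 'M[R]_(p, q)) : (- A)^T = - A^T.
Proof. by apply/matrixP => i j; rewrite !mxE. Qed.

Lemma K_entry (Q : 'M[R]_(m, n)) : Kop Q -> forall i j, `|Q i j| <= 1.
Proof.
move=> hK i j.
have o1 : forall p, (1%:M : 'M[R]_p)^T *m 1%:M = 1%:M by move=> p; rewrite trmx1 mulmx1.
have o2 : forall p, (- 1%:M : 'M[R]_p)^T *m (- 1%:M) = 1%:M.
  by move=> p; rewrite trN trmx1 mulNmx mulmxN opprK mulmx1.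
have h1 := K_W hK (o1 m) (o1 n) i j; have h2 := K_W hK (o2 m) (o1 n) i j.
rewrite trmx1 mul1mx mulmx1 in h1; rewrite trN trmx1 mulNmx mul1mx mulmx1 mxE in h2.
by rewrite ler_norml; apply/andP; split; lra.
Qed.

Lemma ip_tr (X Y : 'M[R]_(m, n)) : ip X Y = \tr (X^T *m Y).
Proof.
rewrite /ip /mxtrace exchange_big; apply: eq_bigr => k _; rewrite mxE.
by apply: eq_bigr => i _; rewrite mxE.
Qed.

Lemma ip_svd (X : 'M[R]_(m, n)) (U : 'M[R]_m) (D : 'M[R]_(m, n)) (V : 'M[R]_n) :
  ip X (U *m D *m V^T) = ip (U^T *m X *m V) D.
Proof.
rewrite !ip_tr !mulmxA mxtrace_mulC !trmx_mul trmxK !mulmxA.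
by [].
Qed.

Definition Pmx : 'M[R]_(m, n) := \matrix_(i, j) ((i : nat) == j)%:R.

Lemma sum_eq_le1 p (i : nat) : \sum_(j < p) ((i == j :> nat))%:R <= 1 :> R.
Proof.
case: (ltnP i p) => [lt|ge].
  rewrite (bigD1 (Ordinal lt)) //= eqxx big1 ?addr0 // => j hj.
  suff -> : (i == j) = false by [].
  by apply/negbTE; apply: contra hj => /eqP e; apply/eqP/val_inj.
rewrite big1 ?ler01 // => j _.
suff -> : (i == j) = false by [].
by apply/negbTE; rewrite neq_ltn (leq_trans (ltn_ord j) ge) orbT.
Qed.

Lemma sqsum p (x : 'cV[R]_p) : (x^T *m x) 0 0 = \sum_i x i 0 ^+ 2.
Proof. by rewrite mxE; apply: eq_bigr => i _; rewrite mxE expr2. Qed.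

Lemma KP : Kop Pmx.
Proof.
move=> x y; rewrite !sqsum mxE.
have -> : \sum_j (x^T *m Pmx) 0 j * y j 0 = \sum_j \sum_i x i 0 * Pmx i j * y j 0.
  by apply: eq_bigr => j _; rewrite mxE mulr_suml; apply: eq_bigr => i _; rewrite mxE.
rewrite mulr_sumr.
apply: (@le_trans _ _ (\sum_j \sum_i (Pmx i j * x i 0 ^+ 2 + Pmx i j * y j 0 ^+ 2))).
  apply: ler_sum => j _; rewrite mulr_sumr; apply: ler_sum => i _.
  rewrite mxE; case: eqP => _ /=; last by rewrite mulr0 !mul0r mulr0 addr0.
  by rewrite !mul1r mulr1; have := sqr_ge0 (x i 0 - y j 0); rewrite sqrrB; lra.
under eq_bigr do rewrite big_split /=.
rewrite big_split /=; apply: lerD.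
  rewrite exchange_big; apply: ler_sum => i _; rewrite -mulr_suml.
  rewrite -[leRHS]mul1r; apply: ler_wpM2r; first exact: sqr_ge0.
  by under eq_bigr do rewrite mxE; apply: sum_eq_le1.
apply: ler_sum => j _; rewrite -mulr_suml.
rewrite -[leRHS]mul1r; apply: ler_wpM2r; first exact: sqr_ge0.
under eq_bigr do rewrite mxE eq_sym; apply: sum_eq_le1.
Qed.

Lemma K_orth (U : 'M[R]_m) (V : 'M[R]_n) : U^T *m U = 1%:M -> V^T *m V = 1%:M ->
  Kop (U *m Pmx *m V^T).
Proof.
move=> hU hV x y; have := KP (U^T *m x) (V^T *m y).
have hU' := orth_sym hU; have hV' := orth_sym hV.
rewrite !trmx_mul !trmxK !mulmxA -[x^T *m U *m U^T]mulmxA hU' mulmx1.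
by rewrite -[y^T *m V *m V^T]mulmxA hV' mulmx1.
Qed.

Lemma nuc_svd (A : 'M[R]_(m, n)) U D V : is_svd A U D V ->
  (forall Q, Kop Q -> ip Q A <= \sum_i \sum_j D i j) /\
  (exists Q, Kop Q /\ ip Q A = \sum_i \sum_j D i j).
Proof.
case=> hU hV hd hp ->; split.
  move=> Q hQ; rewrite ip_svd; apply: ler_sum => i _; apply: ler_sum => j _.
  by rewrite -[leRHS]mul1r; apply: ler_wpM2r => //; apply: K_W.
exists (U *m Pmx *m V^T); split; first exact: K_orth.
rewrite ip_svd !mulmxA hU mul1mx -mulmxA hV mulmx1.
apply: eq_bigr => i _; apply: eq_bigr => j _; rewrite mxE.
by case: eqP => h /=; rewrite ?mul1r ?mul0r // hd //; apply/eqP.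
Qed.

Lemma nuc_props (A : 'M[R]_(m, n)) :
  (forall Q, Kop Q -> ip Q A <= nucnorm A) /\ (exists Q, Kop Q /\ ip Q A = nucnorm A).
Proof.
have [U [D [V h]]] := svd_ex A.
have [U' [V' h']] : exists U V, is_svd A U (svd_diag A) V.
  have hx : exists D0 : 'M[R]_(m, n), (fun D1 : 'M[R]_(m, n) => exists (U1 : 'M[R]_m) (V1 : 'M[R]_n), is_svd A U1 D1 V1) D0.
    by exists D, U, V.
  exact: (xgetPex 0 hx).
exact: nuc_svd h'.
Qed.

End S.

Section S.
Variable R : realType.
Variables m n : nat.
Implicit Types X Y D : 'M[R]_(m, n).

Definition sq X := \sum_i \sum_j X i j ^+ 2.

Lemma sq_ge0 X : 0 <= sq X.
Proof. by apply: sumr_ge0 => i _; apply: sumr_ge0 => j _; apply: sqr_ge0. Qed.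

Lemma frob_sq X : frob X ^+ 2 = sq X.
Proof. by rewrite /frob sqr_sqrtr // sq_ge0. Qed.

Lemma ipD X Y D : ip X (Y + D) = ip X Y + ip X D.
Proof.
rewrite /ip -big_split; apply: eq_bigr => i _; rewrite -big_split.
by apply: eq_bigr => j _; rewrite mxE mulrDr.
Qed.

Lemma ipZ X Y (c : R) : ip X (c *: Y) = c * ip X Y.
Proof.
rewrite /ip mulr_sumr; apply: eq_bigr => i _; rewrite mulr_sumr.
by apply: eq_bigr => j _; rewrite mxE mulrCA.
Qed.

Lemma ipC X Y : ip X Y = ip Y X.
Proof. by apply: eq_bigr => i _; apply: eq_bigr => j _; rewrite mulrC. Qed.

Lemma ipDl X Y D : ip (Y + D) X = ip Y X + ip D X.
Proof. by rewrite ipC ipD ipC [ip X D]ipC. Qed.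

Lemma ipZl X Y (c : R) : ip (c *: Y) X = c * ip Y X.
Proof. by rewrite ipC ipZ ipC. Qed.

Lemma sqE X : sq X = ip X X.
Proof. by apply: eq_bigr => i _; apply: eq_bigr => j _; rewrite expr2. Qed.

Lemma sqD X D (t : R) : sq (X + t *: D) = sq X + 2 * t * ip X D + t ^+ 2 * sq D.
Proof.
rewrite !sqE ipD !ipDl !ipZ !ipZl [ip D X]ipC; ring.
Qed.

Lemma l1_ge0 X : 0 <= l1norm X.
Proof. by apply: sumr_ge0 => i _; apply: sumr_ge0 => j _. Qed.

Lemma l1D X Y : l1norm (X + Y) <= l1norm X + l1norm Y.
Proof.
rewrite /l1norm -big_split; apply: ler_sum => i _; rewrite -big_split.
by apply: ler_sum => j _; rewrite mxE ler_normD.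
Qed.

Lemma l1Z X (c : R) : l1norm (c *: X) = `|c| * l1norm X.
Proof.
rewrite /l1norm mulr_sumr; apply: eq_bigr => i _; rewrite mulr_sumr.
by apply: eq_bigr => j _; rewrite mxE normrM.
Qed.

Lemma sum_delta (F : 'I_m -> 'I_n -> R) i j :
  \sum_i' \sum_j' F i' j' * (delta_mx i j : 'M[R]_(m, n)) i' j' = F i j.
Proof.
rewrite (bigD1 i) //= (bigD1 j) //= big1 ?addr0; last first.
  by move=> j' hj; rewrite mxE eqxx /= (negbTE hj) mulr0.
rewrite big1 ?addr0; last first.
  by move=> i' hi; apply: big1 => j' _; rewrite mxE (negbTE hi) mulr0.
by rewrite mxE !eqxx mulr1.
Qed.

Lemma ip_delta X i j : ip X (delta_mx i j) = X i j.
Proof. exact: sum_delta. Qed.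

Lemma sq_delta i j : sq (delta_mx i j : 'M[R]_(m, n)) = 1.
Proof. by rewrite sqE ip_delta mxE !eqxx. Qed.

Lemma l1_delta i j : l1norm (delta_mx i j : 'M[R]_(m, n)) = 1.
Proof.
rewrite /l1norm -[RHS](sum_delta (fun _ _ => 1) i j).
apply: eq_bigr => i' _; apply: eq_bigr => j' _; rewrite mul1r ger0_norm //.
by rewrite mxE ler0n.
Qed.

Lemma K0 : Kop (0 : 'M[R]_(m, n)).
Proof.
move=> x y; rewrite mulmx0 mul0mx mxE mulr0.
by apply: addr_ge0; rewrite mxE; apply: sumr_ge0 => k _; rewrite mxE -expr2 sqr_ge0.
Qed.

Lemma nuc_ge0 X : 0 <= nucnorm X.
Proof.
have [h _] := nuc_props X; apply: le_trans (h _ K0).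
by rewrite /ip big1 // => i _; rewrite big1 // => j _; rewrite mxE mul0r.
Qed.

Lemma ip_l1 Q X : Kop Q -> ip Q X <= l1norm X.
Proof.
move=> hQ; apply: ler_sum => i _; apply: ler_sum => j _.
apply: le_trans (ler_norm _) _; rewrite normrM -[leRHS]mul1r.
by apply: ler_wpM2r => //; apply: K_entry.
Qed.

Lemma nuc_tri X Y : nucnorm (X + Y) <= nucnorm X + l1norm Y.
Proof.
have [_ [Q [hQ <-]]] := nuc_props (X + Y); have [h _] := nuc_props X.
by rewrite ipD; apply: lerD; [apply: h | apply: ip_l1].
Qed.

Lemma nuc_sc X (c : R) : 0 <= c -> nucnorm (c *: X) <= c * nucnorm X.
Proof.
move=> hc; have [_ [Q [hQ <-]]] := nuc_props (c *: X); have [h _] := nuc_props X.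
by rewrite ipZ; apply: ler_wpM2l => //; apply: h.
Qed.

End S.

Section S.
Variable R : realType.
Variables m n : nat.

Lemma fo (a b : R) : (forall t, 0 < t -> t <= 1 -> 0 <= a * t + b * t ^+ 2) -> 0 <= a.
Proof.
move=> h; rewrite leNgt; apply/negP => ha.
pose c := `|b| - a.
have cpos : 0 < c by rewrite /c; have := normr_ge0 b; lra.
pose t := - a / (2 * c).
have tpos : 0 < t by rewrite /t divr_gt0 //; lra.
have tc : t * (2 * c) = - a by rewrite /t mulfVK // gt_eqF //; lra.
have t1 : t <= 1.
  have : t * (2 * c) <= 1 * (2 * c) by rewrite tc mul1r /c; have := normr_ge0 b; lra.
  by rewrite ler_pM2r //; lra.
have := h t tpos t1.
have hb : b * t ^+ 2 <= `|b| * t ^+ 2 by apply: ler_wpM2r; [apply: sqr_ge0 | apply: ler_norm].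
have : `|b| * t ^+ 2 < - a * t.
  rewrite expr2 mulrA ltr_pM2r //.
  have : `|b| * t <= c * t by apply: ler_wpM2r; [lra | rewrite /c; lra].
  nra.
lra.
Qed.

Lemma pertS (S W D : 'M[R]_(m, n)) (t : R) :
  frob (S + t *: D - W) ^+ 2 = frob (S - W) ^+ 2 + 2 * t * ip (S - W) D + t ^+ 2 * sq D.
Proof. by rewrite !frob_sq -sqD addrAC. Qed.

Lemma ipN (X D : 'M[R]_(m, n)) : ip (- X) D = - ip X D.
Proof. by rewrite -scaleN1r ipZl mulN1r. Qed.

Lemma sqZ (X : 'M[R]_(m, n)) c : sq (c *: X) = c ^+ 2 * sq X.
Proof. by rewrite !sqE ipZ ipZl; ring. Qed.

Lemma sgn_delta (s : R) i j (t : R) (S : 'M[R]_(m, n)) : `|s| = 1 -> 0 < t ->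
  l1norm (S + t *: (s *: delta_mx i j)) <= l1norm S + t.
Proof.
move=> hs ht; apply: le_trans (l1D _ _) _; rewrite !l1Z l1_delta hs.
by rewrite gtr0_norm // !mulr1.
Qed.

Lemma opt_S (lam mu : R) (S W : 'M[R]_(m, n)) : 0 < lam -> 0 < mu ->
  (forall S', lam * l1norm S + mu / 2 * frob (S - W) ^+ 2
      <= lam * l1norm S' + mu / 2 * frob (S' - W) ^+ 2) ->
  (forall i j, `|(mu *: (W - S)) i j| <= lam) /\
  lam * l1norm S <= ip (mu *: (W - S)) S.
Proof.
move=> hl hm hS; set Y := mu *: (W - S).
have hY : forall D, ip (S - W) D = - mu^-1 * ip Y D.
  move=> D; rewrite /Y ipZl -opprB ipN mulNr mulKf // gt_eqF //.
have key : forall D t, 0 <= lam * (l1norm (S + t *: D) - l1norm S)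
    - t * ip Y D + mu / 2 * t ^+ 2 * sq D.
  move=> D t; have := hS (S + t *: D); rewrite pertS hY.
  set F := frob (S - W) ^+ 2; set I := ip Y D; set Q := sq D.
  have -> : mu / 2 * (F + 2 * t * (- mu^-1 * I) + t ^+ 2 * Q)
      = mu / 2 * F - t * I + mu / 2 * t ^+ 2 * Q.
    by field; rewrite gt_eqF.
  lra.
have sgn : forall (s : R) i j, `|s| = 1 -> s * Y i j <= lam.
  move=> s i j hs; rewrite -subr_ge0; apply: (fo (b := mu / 2)) => t ht _.
  have := key (s *: delta_mx i j) t; rewrite ipZ ip_delta sqZ sq_delta.
  have s2 : s ^+ 2 = 1 by rewrite -[s ^+ 2]ger0_norm ?sqr_ge0 // normrX hs expr1n.
  rewrite s2 mulr1; have := @sgn_delta s i j t S hs ht.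
  have : 0 <= lam by lra.
  nra.
split.
  move=> i j; rewrite ler_norml; apply/andP; split.
    by have := sgn (-1) i j; rewrite normrN normr1 mulN1r => /(_ erefl); lra.
  by have := sgn 1 i j; rewrite normr1 mul1r; apply.
rewrite -subr_ge0; apply: (fo (b := mu / 2 * sq S)) => t ht t1.
have := key (- S) t; rewrite ipC ipN ipC.
have -> : S + t *: - S = (1 - t) *: S by rewrite scalerN scalerBl scale1r.
rewrite l1Z ger0_norm ?subr_ge0 // -scaleN1r sqZ sqrrN expr1n mul1r.
have := l1_ge0 S.
nra.
Qed.

Lemma opt_L (gam beta mu : R) (L V L1 : 'M[R]_(m, n)) : 0 <= gam -> 0 < mu ->
  (forall L', nucnorm L + gam * frob (L - beta *: L1) ^+ 2 + mu / 2 * frob (L - V) ^+ 2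
     <= nucnorm L' + gam * frob (L' - beta *: L1) ^+ 2 + mu / 2 * frob (L' - V) ^+ 2) ->
  (forall i j, `|(mu *: (V - L) - (2 * gam) *: (L - beta *: L1)) i j| <= 1) /\
  0 <= ip (mu *: (V - L) - (2 * gam) *: (L - beta *: L1)) L.
Proof.
move=> hg hm hL; set G := mu *: (V - L) - (2 * gam) *: (L - beta *: L1).
have hG : forall D, ip G D = - mu * ip (L - V) D - 2 * gam * ip (L - beta *: L1) D.
  move=> D; rewrite /G [in LHS]ipDl [in LHS]ipN ![in LHS]ipZl -[V - L]opprB ipN; ring.
have key : forall D t, 0 <= (nucnorm (L + t *: D) - nucnorm L)
    - t * ip G D + (gam + mu / 2) * t ^+ 2 * sq D.
  move=> D t; have := hL (L + t *: D); rewrite !pertS hG.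
  set F1 := frob (L - beta *: L1) ^+ 2; set F2 := frob (L - V) ^+ 2.
  set I1 := ip (L - beta *: L1) D; set I2 := ip (L - V) D; set Q := sq D.
  lra.
have sgn : forall (s : R) i j, `|s| = 1 -> s * G i j <= 1.
  move=> s i j hs; rewrite -subr_ge0; apply: (fo (b := gam + mu / 2)) => t ht _.
  have := key (s *: delta_mx i j) t; rewrite ipZ ip_delta sqZ sq_delta.
  have s2 : s ^+ 2 = 1 by rewrite -[s ^+ 2]ger0_norm ?sqr_ge0 // normrX hs expr1n.
  rewrite s2 mulr1.
  have := nuc_tri L (t *: (s *: delta_mx i j)); rewrite !l1Z l1_delta hs gtr0_norm //.
  rewrite !mulr1; nra.
split.
  move=> i j; rewrite ler_norml; apply/andP; split.
    by have := sgn (-1) i j; rewrite normrN normr1 mulN1r => /(_ erefl); lra.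
  by have := sgn 1 i j; rewrite normr1 mul1r; apply.
apply: (fo (b := (gam + mu / 2) * sq L)) => t ht t1.
have := key (- L) t; rewrite ipC ipN ipC.
have -> : L + t *: - L = (1 - t) *: L by rewrite scalerN scalerBl scale1r.
rewrite -scaleN1r sqZ sqrrN expr1n mul1r.
have : 0 <= 1 - t by lra.
move=> /(nuc_sc L) ?.
have : 0 <= t * nucnorm L by apply: mulr_ge0; [lra | apply: nuc_ge0].
lra.
Qed.

End S.

Section S.
Variable R : realType.

Lemma delta_bound (m lam mu0 y y' : R) : 0 < mu0 -> mu0 <= m ->
  `|y| <= lam -> `|y'| <= lam -> `|(y' - y) / m| <= 2 * lam / mu0.
Proof.
move=> h0 hm hy hy'; have mpos : 0 < m by lra.
rewrite normrM normfV (gtr0_norm mpos).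
have h1 : `|y' - y| <= 2 * lam.
  by apply: le_trans (ler_normB _ _) _; lra.
have h2 : m^-1 <= mu0^-1 by rewrite lef_pV2 ?posrE //.
have l0 : 0 <= lam by have := normr_ge0 y; lra.
apply: (@le_trans _ _ (2 * lam * m^-1)).
  by apply: ler_wpM2r => //; rewrite invr_ge0; lra.
by apply: ler_wpM2l => //; lra.
Qed.

Lemma entry_ineq (m lam mu0 gam h b s s' y y' l' g : R) :
  0 < mu0 -> mu0 <= m -> 0 <= gam -> `|y| <= lam -> `|y'| <= lam -> `|g| <= 1 ->
  y' = y + m * (h - l' - s') ->
  g = m * (h - s + m^-1 * y - l') - 2 * gam * (l' - b) ->
  m * (s' ^+ 2 - s ^+ 2) <=
  2 * (`|h| + 2 * lam / mu0 + gam * (`|h| + 2 * lam / mu0 + `|b|) ^+ 2 / 2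
       - g * l' - y' * s').
Proof.
move=> h0 hm hg hy hy' hgb E1 E2.
have mpos : 0 < m by lra.
set d := (y' - y) / m.
have hd : `|d| <= 2 * lam / mu0 by apply: delta_bound.
have lE : l' = h - s' - d.
  rewrite /d E1; field; rewrite gt_eqF //.
have dE : m * (s' - s) = g - y' + 2 * gam * (l' - b).
  rewrite E2 E1; field; rewrite gt_eqF //.
set D0 := 2 * lam / mu0.
have step1 : m * (s' ^+ 2 - s ^+ 2) <= 2 * (m * (s' - s)) * s'.
  have : 0 <= m * (s' - s) ^+ 2 by apply: mulr_ge0; [lra | apply: sqr_ge0].
  rewrite !expr2; nra.
rewrite dE in step1.
set c := h - d - b.
have hc : `|c| <= `|h| + D0 + `|b|.
  apply: le_trans (ler_normB _ _) _; apply: lerD => //.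
  by apply: le_trans (ler_normB _ _) _; apply: lerD.
have hc2 : c ^+ 2 <= (`|h| + D0 + `|b|) ^+ 2.
  rewrite -[c ^+ 2]ger0_norm ?sqr_ge0 // normrX.
  by apply: lerXn2r => //; rewrite ?nnegrE //; apply: le_trans hc.
have g1 : g * (h - d) <= `|h| + D0.
  apply: le_trans (ler_norm _) _; rewrite normrM.
  have : `|h - d| <= `|h| + D0 by apply: le_trans (ler_normB _ _) _; apply: lerD.
  have := normr_ge0 (h - d); have := normr_ge0 g; nra.
have q1 : 2 * gam * (l' - b) * s' <= gam * c ^+ 2 / 2.
  have -> : l' - b = c - s' by rewrite lE /c; ring.
  have : 0 <= gam * (c - 2 * s') ^+ 2 by apply: mulr_ge0 => //; apply: sqr_ge0.
  rewrite !expr2; nra.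
have q2 : gam * c ^+ 2 / 2 <= gam * (`|h| + D0 + `|b|) ^+ 2 / 2.
  by apply: ler_wpM2r; [lra | apply: ler_wpM2l].
have gs : g * s' = g * (h - d) - g * l' by rewrite lE; ring.
nra.
Qed.
End S.

Section S.
Variable R : realType.
Variables m n : nat.
Implicit Types X : 'M[R]_(m, n).

Lemma le_sum2 (F : 'I_m -> 'I_n -> R) i j : (forall i j, 0 <= F i j) ->
  F i j <= \sum_i' \sum_j' F i' j'.
Proof.
move=> hF; rewrite (bigD1 i) //= (bigD1 j) //= -addrA lerDl.
apply: addr_ge0; first by apply: sumr_ge0 => k _; apply: hF.
by apply: sumr_ge0 => k _; apply: sumr_ge0 => l _; apply: hF.
Qed.

Lemma ent_l1 X i j : `|X i j| <= l1norm X.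
Proof. by have := @le_sum2 (fun a b => `|X a b|) i j; apply. Qed.

Lemma ent_sq X i j : X i j ^+ 2 <= sq X.
Proof. by have := @le_sum2 (fun a b => X a b ^+ 2) i j; apply => *; apply: sqr_ge0. Qed.

Lemma sq_l1 X : sq X <= l1norm X ^+ 2.
Proof.
rewrite expr2 /sq {1}/l1norm mulr_suml; apply: ler_sum => i _.
rewrite mulr_suml; apply: ler_sum => j _.
have := ent_l1 X i j; have := normr_ge0 (X i j).
have -> : X i j ^+ 2 = `|X i j| * `|X i j| by rewrite -normrM -expr2 ger0_norm ?sqr_ge0.
by move=> h1 h2; apply: ler_wpM2l.
Qed.

Lemma frob_l1 X : frob X <= l1norm X.
Proof.
rewrite /frob -[l1norm X]ger0_norm ?l1_ge0 // -sqrtr_sqr.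
by apply: ler_wsqrtr; apply: sq_l1.
Qed.

Lemma frob_sqb X (B : R) : 0 <= B -> sq X <= B ^+ 2 -> frob X <= B.
Proof.
move=> hB h; rewrite /frob -[B]ger0_norm // -sqrtr_sqr.
by apply: ler_wsqrtr.
Qed.

Lemma ent_b X (B : R) i j : 0 <= B -> sq X <= B ^+ 2 -> `|X i j| <= B.
Proof.
move=> hB h; have := ent_sq X i j; rewrite -[X i j ^+ 2]ger0_norm ?sqr_ge0 // normrX.
move=> h2; have h3 : `|X i j| ^+ 2 <= B ^+ 2 by apply: le_trans h.
by rewrite -(ler_pXn2r (_ : (0 < 2)%N)) // nnegrE.
Qed.
End S.

Unset Implicit Arguments. Set Strict Implicit.
Theorem lemma2 (R : realType) (Ns Nb : nat) (Hu L1 : 'M[R]_(Ns, Nb))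
  (lambda gamma beta mu0 rho mumax : R)
  (Hlambda : 0 < lambda) (Hgamma : 0 <= gamma) (Hmu0 : 0 < mu0)
  (Hrho : 1 < rho) (Hmumax : mu0 <= mumax)
  (L S Y : nat -> 'M[R]_(Ns, Nb)) (mu : nat -> R)
  (Hmu_0 : mu 0%N = mu0)
  (Hmu_S : forall k, mu k.+1 = Num.min (rho * mu k) mumax)
  (HS0 : S 0%N = 0) (HY0 : Y 0%N = 0)
  (HL : forall k (L' : 'M[R]_(Ns, Nb)),
     nucnorm (L k.+1) + gamma * frob (L k.+1 - beta *: L1) ^+ 2
       + mu k / 2 * frob (L k.+1 - (Hu - S k + (mu k)^-1 *: Y k)) ^+ 2
     <= nucnorm L' + gamma * frob (L' - beta *: L1) ^+ 2
       + mu k / 2 * frob (L' - (Hu - S k + (mu k)^-1 *: Y k)) ^+ 2)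
  (HS : forall k (S' : 'M[R]_(Ns, Nb)),
     lambda * l1norm (S k.+1)
       + mu k / 2 * frob (S k.+1 - (Hu - L k.+1 + (mu k)^-1 *: Y k)) ^+ 2
     <= lambda * l1norm S'
       + mu k / 2 * frob (S' - (Hu - L k.+1 + (mu k)^-1 *: Y k)) ^+ 2)
  (HY : forall k, Y k.+1 = Y k + mu k *: (Hu - L k.+1 - S k.+1)) :
  exists C : R, forall k, frob (L k) <= C /\ frob (S k) <= C.
Proof.
have mub : forall k, mu0 <= mu k.
  elim=> [|k IH]; first by rewrite Hmu_0.
  rewrite Hmu_S le_min Hmumax andbT; apply (le_trans IH).
  rewrite -[X in X <= _]mul1r; apply: ler_wpM2r; lra.
have mupos : forall k, 0 < mu k by move=> k; apply: lt_le_trans Hmu0 (mub k).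
have Sfact : forall k, (forall i j, `|Y k.+1 i j| <= lambda) /\
    lambda * l1norm (S k.+1) <= ip (Y k.+1) (S k.+1).
  move=> k; have := opt_S Hlambda (mupos k) (HS k).
  have -> : mu k *: (Hu - L k.+1 + (mu k)^-1 *: Y k - S k.+1) = Y k.+1.
    rewrite HY; apply/matrixP => i j; rewrite !mxE; field.
    by rewrite gt_eqF.
  by [].
have Yb : forall k i j, `|Y k i j| <= lambda.
  case=> [|k] i j; first by rewrite HY0 mxE normr0 ltW.
  exact: (Sfact k).1.
pose G k := mu k *: ((Hu - S k + (mu k)^-1 *: Y k) - L k.+1)
   - (2 * gamma) *: (L k.+1 - beta *: L1).
have Lfact : forall k, (forall i j, `|G k i j| <= 1) /\ 0 <= ip (G k) (L k.+1).
  by move=> k; apply: (opt_L Hgamma (mupos k) (HL k)).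
pose d0 := 2 * lambda / mu0.
have d0ge : 0 <= d0 by rewrite /d0; apply: divr_ge0; lra.
pose kap (i : 'I_Ns) (j : 'I_Nb) := `|Hu i j| + d0
   + gamma * (`|Hu i j| + d0 + `|beta * L1 i j|) ^+ 2 / 2.
have kap0 : forall i j, 0 <= kap i j.
  move=> i j; rewrite /kap; apply: addr_ge0; first by apply: addr_ge0.
  by apply: divr_ge0 => //; apply: mulr_ge0 => //; apply: sqr_ge0.
pose K0 := \sum_i \sum_j kap i j.
have K0ge : 0 <= K0 by apply: sumr_ge0 => i _; apply: sumr_ge0 => j _.
have step : forall k, mu k * (sq (S k.+1) - sq (S k))
    <= 2 * (K0 - lambda * l1norm (S k.+1)).
  move=> k; have [Gb GL] := Lfact k; have [_ YS] := Sfact k.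
  apply: (@le_trans _ _ (2 * (K0 - ip (G k) (L k.+1) - ip (Y k.+1) (S k.+1))));
    last by lra.
  have E1 : mu k * (sq (S k.+1) - sq (S k))
      = \sum_i \sum_j mu k * (S k.+1 i j ^+ 2 - S k i j ^+ 2).
    rewrite /sq -sumrB mulr_sumr; apply: eq_bigr => i _.
    by rewrite -sumrB mulr_sumr.
  have E2 : 2 * (K0 - ip (G k) (L k.+1) - ip (Y k.+1) (S k.+1))
      = \sum_i \sum_j 2 * (kap i j - G k i j * L k.+1 i j - Y k.+1 i j * S k.+1 i j).
    rewrite /K0 /ip -!sumrB mulr_sumr; apply: eq_bigr => i _.
    by rewrite -!sumrB mulr_sumr.
  rewrite E1 E2; apply: ler_sum => i _; apply: ler_sum => j _.
  apply: (entry_ineq Hmu0 (mub k) Hgamma (Yb k i j) (Yb k.+1 i j) (Gb i j)).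
    by rewrite HY !mxE.
  by rewrite /G !mxE.
pose Bs := K0 / lambda.
have Bsge : 0 <= Bs by apply: divr_ge0 => //; lra.
have bound : forall k, sq (S k) <= Bs ^+ 2.
  elim=> [|k IH].
    rewrite HS0 /sq big1 ?sqr_ge0 // => i _; rewrite big1 // => j _.
    by rewrite mxE expr2 mulr0.
  have hst := step k; have hm := mupos k.
  case: (leP Bs (l1norm (S k.+1))) => h.
    have h1 : K0 <= lambda * l1norm (S k.+1).
      by rewrite -ler_pdivrMl // mulrC.
    have h2 : mu k * (sq (S k.+1) - sq (S k)) <= 0 by lra.
    have h3 : sq (S k.+1) - sq (S k) <= 0.
      by rewrite -(pmulr_rle0 _ hm).
    lra.
  apply: le_trans (sq_l1 _) _.
  by apply: lerXn2r; rewrite ?nnegrE ?l1_ge0 // ltW.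
pose CL := \sum_(i < Ns) \sum_(j < Nb) (`|Hu i j| + Bs + d0).
exists (Num.max (frob (L 0%N)) (Num.max Bs CL)).
have SB : forall k, frob (S k) <= Num.max (frob (L 0%N)) (Num.max Bs CL).
  move=> k; rewrite !le_max; apply/orP; right; apply/orP; left.
  exact: frob_sqb (bound k).
case=> [|k]; split => //; first by rewrite le_max lexx.
rewrite !le_max; apply/orP; right; apply/orP; right.
apply: le_trans (frob_l1 _) _; apply: ler_sum => i _; apply: ler_sum => j _.
have lE : L k.+1 i j = Hu i j - S k.+1 i j - (Y k.+1 i j - Y k i j) / mu k.
  rewrite HY !mxE; field; rewrite gt_eqF //.
rewrite lE; apply: le_trans (ler_normB _ _) _; apply: lerD.
  apply: le_trans (ler_normB _ _) _; apply: lerD => //.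
  exact: ent_b (bound k.+1).
exact: delta_bound (mub k) (Yb k i j) (Yb k.+1 i j).
Qed.
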